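(* In the setting of the context, let $M$ be the central equidistant of $P$. Then the mixed area $$A(M,M)=\frac12\sum_{i=1}^{2n}[M_i,M_{i+1}-M_i]$$ is non-positive.
   Context: $[x,y]$ denotes the determinant of the matrix with columns $x,y\in\mathbb{R}^2$. Fix $n\ge2$; indices are read modulo $2n$. $U$ is a convex $2n$-gon with distinct vertices $U_1,\dots,U_{2n}$ in counterclockwise order with $U_{i+n}=-U_i$. Let $c>0$ and let $P$ be a convex polygon with nonempty interior and vertex list $P_1,\dots,P_{2n}$ (consecutive entries may coincide) with $P_{i+1}-P_i$ a nonnegative multiple of $U_{i+1}-U_i$ and $P_i-P_{i+n}=2cU_i$ for all $i$ (a polygon of constant width in the norm with unit ball $U$). The central equidistant $M$ of $P$ has vertices $M_i=\frac12(P_i+P_{i+n})$. *)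

(* Defs.v *)
From HB Require Import structures.
From mathcomp Require Import all_boot all_order all_algebra.
Set Implicit Arguments. Unset Strict Implicit. Unset Printing Implicit Defensive.
Import Order.TTheory GRing.Theory Num.Theory.
Local Open Scope ring_scope.

(* Points of R^2 are pairs; polygons are 2n-periodic maps nat -> R^2
   (indices read modulo 2n). *)

Definition det2 {R : pzRingType} (x y : R * R) : R := x.1 * y.2 - x.2 * y.1.

Definition vsub {R : pzRingType} (x y : R * R) : R * R := (x.1 - y.1, x.2 - y.2).
Definition vadd {R : pzRingType} (x y : R * R) : R * R := (x.1 + y.1, x.2 + y.2).
Definition vscale {R : pzRingType} (a : R) (x : R * R) : R * R := (a * x.1, a * x.2).

Definition periodic {T : Type} (m : nat) (V : nat -> T) : Prop :=
  forall i, V (i + m)%N = V i.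

(* V_0, ..., V_(m-1) are the vertices of a (strictly) convex m-gon, listed in
   counterclockwise order: every other vertex lies strictly to the left of the
   directed edge V_i -> V_(i+1).  (This forces distinct vertices.) *)
Definition strictly_convex_ccw {R : numDomainType} (m : nat) (V : nat -> R * R) : Prop :=
  forall i j : nat, (i < m)%N -> (j < m)%N -> j <> i -> j <> ((i + 1) %% m)%N ->
    0 < det2 (vsub (V (i + 1)%N) (V i)) (vsub (V j) (V i)).

(* Weak convexity (counterclockwise) of a vertex list in which consecutive
   entries may coincide. *)
Definition convex_ccw {R : numDomainType} (m : nat) (V : nat -> R * R) : Prop :=
  forall i j : nat, 0 <= det2 (vsub (V (i + 1)%N) (V i)) (vsub (V j) (V i)).

Definition nonempty_interior {R : numDomainType} (m : nat) (V : nat -> R * R) : Prop :=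
  exists i j k : nat, det2 (vsub (V j) (V i)) (vsub (V k) (V i)) != 0.

Definition central_equidistant {R : numFieldType} (n : nat) (P : nat -> R * R) : nat -> R * R :=
  fun i => vscale (2^-1) (vadd (P i) (P (i + n)%N)).

Definition mixed_area_self {R : numFieldType} (m : nat) (M : nat -> R * R) : R :=
  2^-1 * \sum_(i < m) det2 (M i) (vsub (M (i.+1)) (M i)).

(* Main.v *)
Require Import Defs.
From HB Require Import structures.
From mathcomp Require Import all_boot all_order all_algebra.
Import Order.TTheory GRing.Theory Num.Theory.
From mathcomp Require Import ring lra zify.
Local Open Scope ring_scope.

From mathcomp Require Import ring lra zify.
Import Order.TTheory GRing.Theory Num.Theory.
Local Open Scope ring_scope.

Section K.
Variable R : realFieldType.
Local Open Scope ring_scope.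

Definition shoe (N : nat) (M : nat -> R * R) : R :=
  \sum_(0 <= j < N) det2 (M j) (M j.+1).

Lemma pairE (x y : R * R) : x.1 = y.1 -> x.2 = y.2 -> x = y.
Proof. by case: x; case: y => /= ? ? ? ? -> ->. Qed.

Lemma edgeE (x y z : R * R) mu : vsub x y = vscale mu z ->
  x.1 = y.1 + mu * z.1 /\ x.2 = y.2 + mu * z.2.
Proof.
move=> h; have h1 := congr1 fst h; have h2 := congr1 snd h.
move: h1 h2; rewrite /vsub /vscale /= => h1 h2; split.
  by rewrite -h1; ring. by rewrite -h2; ring.
Qed.
Arguments edgeE [x y z mu].
Arguments pairE [x y].

Lemma key (d : nat -> R * R) : forall K (M : nat -> R * R),
  (forall k, (1 <= k < K.+2)%N -> 0 < det2 (d 0%N) (d k) /\ 0 < det2 (d k.-1) (d k)) ->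
  (forall j, (j < K.+2)%N -> exists mu, vsub (M j.+1) (M j) = vscale mu (d j)) ->
  M K.+2 = M 0%N ->
  shoe K.+2 M <= 0.
Proof.
elim=> [|K IH] M hd he cl.
  rewrite /shoe big_nat_recr //= big_nat1 cl le_eqVlt; apply/orP; left; apply/eqP; rewrite /det2 /=; ring.
have [m0 e0] := he 0%N isT.
have [mA eA] := he K.+1 (ltnW (ltnSn _)).
have [t eB] := he K.+2 (ltnSn _).
have [x0p xp] := hd K.+2 (ltnSn _).
have [Dp' _] := hd K.+1 (ltnW (ltnSn _)).
set D := det2 (d 0%N) (d K.+1) in Dp'.
set x0 := det2 (d 0%N) (d K.+2) in x0p.
set x := det2 (d K.+1) (d K.+2) in xp.
simpl in xp.
have Dn : D != 0 by rewrite gt_eqF.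
pose v := vscale (- (t * x / D)) (d 0%N).
pose M' := fun j : nat => if j == 0%N then M 0%N else if (j <= K.+1)%N then vadd (M j) v else M 0%N.
have M'0 : M' 0%N = M 0%N by [].
have M'j : forall j, (0 < j <= K.+1)%N -> M' j = vadd (M j) v.
  move=> j /andP[j0 jK]; by rewrite /M' (negbTE (lt0n_neq0 j0)) jK.
have M'K : M' K.+2 = M 0%N by rewrite /M' /= ltnn.
have hS : shoe K.+2 M' <= 0.
  apply: IH => //.
  - move=> k /andP[k1 kK]; apply: hd; rewrite k1 /=; exact: ltnW.
  - move=> j jK.
    case: (posnP j) => [->|j0].
      exists (m0 - t * x / D); rewrite M'0 M'j //.
      have [a1 a2] := edgeE e0.
      apply: pairE; rewrite /vsub /vadd /vscale /v /= ?a1 ?a2; ring.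
    case: (ltngtP j K.+1) => [jlt|jgt|->].
    + have [mu emu] := he j (ltac:(lia)).
      exists mu; rewrite M'j ?j0 /= ?(ltnW jlt) // M'j ?j0 /= ?jlt //.
      have [a1 a2] := edgeE emu.
      apply: pairE; rewrite /vsub /vadd /vscale /= ?a1 ?a2; ring.
    + by move: jK; rewrite ltnS leqNgt jgt.
    + exists (mA + t * x0 / D); rewrite M'K M'j ?leqnn //.
      have [a1 a2] := edgeE eA; have [b1 b2] := edgeE eB.
      move: cl; case E: (M K.+3) => [c1 c2] cl; rewrite -cl /=.
      rewrite E /= in b1 b2.
      rewrite /v /vsub /vadd /vscale /=.
      rewrite /D /x /x0 /det2 in Dn *.
      apply: pairE; rewrite /= ?b1 ?b2 ?a1 ?a2 /=; field; done.
have dec1 : shoe K.+3 M = det2 (M 0%N) (M 1%N) + \sum_(1 <= j < K.+1) det2 (M j) (M j.+1)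
    + det2 (M K.+1) (M K.+2) + det2 (M K.+2) (M K.+3).
  by rewrite /shoe big_nat_recr // big_nat_recr // big_ltn //= addrA.
have dec2 : shoe K.+2 M' = det2 (M 0%N) (vadd (M 1%N) v) +
    (\sum_(1 <= j < K.+1) det2 (M j) (M j.+1) + (det2 v (M K.+1) - det2 v (M 1%N)))
    + det2 (vadd (M K.+1) v) (M 0%N).
  rewrite /shoe big_nat_recr //= big_ltn // M'0 M'j // M'K M'j ?leqnn //.
  congr (_ + _ + _).
  rewrite -(@telescope_sumr _ 1 K.+1 (fun j => det2 v (M j))) // -big_split /=.
  apply: eq_big_nat => i /andP[i1 iK].
  rewrite M'j; last lia. rewrite M'j; last lia.
  rewrite /det2 /vadd /=; ring.
have Eq : shoe K.+3 M = shoe K.+2 M' - t ^+ 2 * x * x0 / D.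
rewrite dec1 dec2.
set S := \sum_(1 <= j < K.+1) _.
have [a1 a2] := edgeE e0.
have [c1 c2] := edgeE eA; have [b1 b2] := edgeE eB.
rewrite cl in b1 b2.
rewrite cl /v /det2 /vadd /vscale /=.
rewrite /D /x /x0 /det2 in Dn *.
rewrite /= a1 a2.
have hc1 : (M K.+1).1 = (M K.+2).1 - mA * (d K.+1).1 by rewrite c1; ring.
have hc2 : (M K.+1).2 = (M K.+2).2 - mA * (d K.+1).2 by rewrite c2; ring.
have hb1 : (M K.+2).1 = (M 0%N).1 - t * (d K.+2).1 by rewrite b1; ring.
have hb2 : (M K.+2).2 = (M 0%N).2 - t * (d K.+2).2 by rewrite b2; ring.
rewrite hc1 hc2 hb1 hb2.
field; done.
rewrite Eq.
have : 0 <= t ^+ 2 * x * x0 / D.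
  apply: divr_ge0; last exact: ltW.
  apply: mulr_ge0; last exact: ltW.
  apply: mulr_ge0; [exact: sqr_ge0 | exact: ltW].
lra.
Qed.

Lemma turn (u0 u1 p q r : R * R) :
  0 < det2 (vsub u1 u0) (vsub q p) ->
  0 < det2 (vsub q p) (vsub r q) ->
  0 < det2 (vsub (vscale (-1) u1) (vscale (-1) u0)) (vsub q (vscale (-1) u0)) ->
  0 < det2 (vsub q p) (vsub (vscale (-1) u1) p) ->
  0 < det2 (vsub r q) (vsub (vscale (-1) u1) q) ->
  0 < det2 (vsub u1 u0) (vsub r q).
Proof.
move=> h1 h2 h3 h4 h5.
have e : det2 (vsub u1 u0) (vsub r q) * det2 (vsub q p) (vsub (vscale (-1) u1) p) =
  det2 (vsub u1 u0) (vsub q p) * det2 (vsub r q) (vsub (vscale (-1) u1) q) +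
  det2 (vsub q p) (vsub r q) * det2 (vsub (vscale (-1) u1) (vscale (-1) u0)) (vsub q (vscale (-1) u0)).
  clear h1 h2 h3 h4 h5; case: u0 => a0 b0; case: u1 => a1 b1; case: p => a2 b2.
  case: q => a3 b3; case: r => a4 b4.
  rewrite /det2 /vsub /vscale /=; ring.
have hp : 0 < det2 (vsub u1 u0) (vsub r q) * det2 (vsub q p) (vsub (vscale (-1) u1) p).
  by rewrite e; apply: addr_gt0; apply: mulr_gt0.
by rewrite pmulr_lgt0 in hp.
Qed.

Lemma loc_id (p q r : R * R) : det2 (vsub q p) (vsub r q) = det2 (vsub q p) (vsub r p).
Proof. case: p => ? ?; case: q => ? ?; case: r => ? ?; rewrite /det2 /vsub /=; ring. Qed.

Lemma sum_split (f : nat -> R) (a b : nat) :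
  \sum_(a <= i < a + b) f i = \sum_(0 <= i < b) f (i + a)%N.
Proof.
elim: b => [|b IH]; first by rewrite addn0 !big_geq.
rewrite addnS big_nat_recr ?leq_addr // IH big_nat_recr //= [(a + b)%N]addnC //.
Qed.
End K.
Arguments shoe {R}.

Theorem lemma3p3 (R : realFieldType) (n : nat) (U P : nat -> R * R) (c : R) :
  (2 <= n)%N ->
  periodic (2 * n) U ->
  strictly_convex_ccw (2 * n) U ->
  (forall i, U (i + n)%N = vscale (-1) (U i)) ->
  0 < c ->
  periodic (2 * n) P ->
  convex_ccw (2 * n) P ->
  nonempty_interior (2 * n) P ->
  (forall i, exists2 lam : R, 0 <= lam &
     vsub (P i.+1) (P i) = vscale lam (vsub (U i.+1) (U i))) ->
  (forall i, vsub (P i) (P (i + n)%N) = vscale (2 * c) (U i)) ->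
  mixed_area_self (2 * n) (central_equidistant n P) <= 0.
Proof.
move=> hn pU cU sU c0 pP cP ne hl hw.
pose d := fun k => vsub (U k.+1) (U k).
set M := central_equidistant n P.
have cv : forall i j, (i + 1 < 2 * n)%N -> (j < 2 * n)%N -> j <> i -> j <> (i + 1)%N ->
    0 < det2 (vsub (U (i + 1)%N) (U i)) (vsub (U j) (U i)).
  move=> i j h1 h2 h3 h4; apply: cU => //; first lia.
  by rewrite modn_small.
have loc : forall k, (k.+1 < n)%N -> 0 < det2 (d k) (d k.+1).
  move=> k hk; rewrite /d loc_id.
  have := cv k k.+2 ltac:(lia) ltac:(lia) ltac:(lia) ltac:(lia).
  by rewrite addn1.
have U0 : U n = vscale (-1) (U 0%N) by rewrite -(sU 0%N) add0n.
have U1 : U (n + 1)%N = vscale (-1) (U 1%N) by rewrite -(sU 1%N) addnC.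
have glob : forall k, (k.+1 < n)%N -> 0 < det2 (d 0%N) (d k.+1).
  elim=> [|k IH] hk; first exact: loc.
  have IH' := IH ltac:(lia).
  rewrite /d; apply: (@turn _ (U 0%N) (U 1%N) (U k.+1) (U k.+2) (U k.+3)).
  - exact: IH'.
  - exact: (loc k.+1 hk).
  - have := cv n k.+2 ltac:(lia) ltac:(lia) ltac:(lia) ltac:(lia).
    by rewrite U0 U1.
  - have := cv k.+1 (n + 1)%N ltac:(lia) ltac:(lia) ltac:(lia) ltac:(lia).
    by rewrite U1 addn1.
  - have := cv k.+2 (n + 1)%N ltac:(lia) ltac:(lia) ltac:(lia) ltac:(lia).
    by rewrite U1 addn1.
have PE : forall i, (P (i + n)%N).1 = (P i).1 - 2 * c * (U i).1 /\ (P (i + n)%N).2 = (P i).2 - 2 * c * (U i).2.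
  move=> i; have := hw i; move=> h; have h1 := congr1 fst h; have h2 := congr1 snd h.
  move: h1 h2; rewrite /vsub /vscale /= => h1 h2; split.
    by rewrite -h1; ring. by rewrite -h2; ring.
have ME : forall i, M i = vsub (P i) (vscale c (U i)).
  move=> i; have [a1 a2] := PE i.
  apply: pairE; rewrite /M /central_equidistant /vscale /vadd /vsub /= ?a1 ?a2;
    by field.
have Mper : forall i, M (i + n)%N = M i.
  move=> i; rewrite /M /central_equidistant -addnA addnn -mul2n pP.
  apply: pairE; rewrite /vscale /vadd /=; ring.
have he : forall j, exists mu, vsub (M j.+1) (M j) = vscale mu (d j).
  move=> j; have [lam _ hlam] := hl j; exists (lam - c).
  have [a1 a2] := @edgeE _ _ _ _ _ hlam.
  apply: pairE; rewrite !ME /d /vsub /vscale /= ?a1 ?a2 /vsub /=; ring.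
have hS : shoe n M <= 0.
  have [K eK] : exists K, n = K.+2 by exists (n - 2)%N; lia.
  have cl : M n = M 0%N by rewrite -(Mper 0%N) add0n.
  move: cl; rewrite eK => cl.
  apply: (@key _ d); [ | by move=> j _; exact: he | exact: cl].
  move=> k /andP[k1 kK]; case: k k1 kK => // k _ kK; split.
    apply: glob; lia.
  apply: loc; lia.
rewrite /mixed_area_self -(big_mkord xpredT (fun i => det2 (M i) (vsub (M i.+1) (M i)))) mul2n -addnn (@big_cat_nat _ _ _ n) ?leq_addr //=.
rewrite (sum_split _ _ n n).
have -> : \sum_(0 <= i < n) det2 (M (i + n)%N) (vsub (M (i + n).+1) (M (i + n)%N))
        = shoe n M.
  apply: eq_big_nat => i _; rewrite -addSn !Mper /det2 /vsub /=; ring.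
have -> : \sum_(0 <= i < n) det2 (M i) (vsub (M i.+1) (M i)) = shoe n M.
  apply: eq_big_nat => i _; rewrite /det2 /vsub /=; ring.
apply: mulr_ge0_le0; first by rewrite invr_ge0.
lra.
Qed.
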